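(* Let $X$ be a continuum, let $n\geq 2$ be an integer, and let $f:X\to X$ be a map. Then $F_n(f)$ is $\mathbb{Z}$-transitive if and only if $f$ is weakly mixing.
   Context: A continuum is a nonempty compact connected metric space. $F_n(X)$ is the set of nonempty subsets of $X$ with at most $n$ points, with the Hausdorff metric topology, and $F_n(f)(A)=f(A)$. A map $g:Z\to Z$ is $\mathbb{Z}$-transitive if for any nonempty open $U,V\subseteq Z$ there is $k\in\mathbb{Z}$ with $g^k(U)\cap V\neq\emptyset$, where for $k<0$, $g^k(U)$ means $(g^{-k})^{-1}(U)$. $f$ is weakly mixing if for any nonempty open $U_1,U_2,V_1,V_2\subseteq X$ there is $k\in\mathbb{N}$ with $f^k(U_1)\cap V_1\neq\emptyset$ and $f^k(U_2)\cap V_2\neq\emptyset$. *)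

(* Defs.v *)
From HB Require Import structures.
From mathcomp Require Import all_boot all_order all_algebra.
From mathcomp Require Import all_classical all_reals all_analysis.
Set Implicit Arguments. Unset Strict Implicit. Unset Printing Implicit Defensive.
Import Order.TTheory GRing.Theory Num.Theory.
Local Open Scope classical_set_scope.
Local Open Scope ring_scope.

Section Hyperspace.
Context {R : realType} {X : metricType R}.

Definition pt_set_dist (x : X) (B : set X) : R := inf [set mdist x b | b in B].
Definition hausdorff_dist (A B : set X) : R :=
  Num.max (sup [set pt_set_dist a B | a in A]) (sup [set pt_set_dist b A | b in B]).

Definition Fn (n : nat) : set (set X) :=
  [set A | A !=set0 /\ exists s : seq X, (size s <= n)%N /\ A = [set x | x \in s]].

Definition Fn_open (n : nat) (U : set (set X)) : Prop :=
  U `<=` Fn n /\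
  forall A, U A -> exists2 e : R, 0 < e &
    forall B, Fn n B -> hausdorff_dist A B < e -> U B.

Definition Fnf (f : X -> X) (A : set X) : set X := f @` A.

Definition Fn_iter_set (n : nat) (f : X -> X) (k : int) (U : set (set X))
  : set (set X) :=
  match k with
  | Posz m => [set iter m (Fnf f) A | A in U]
  | Negz m => [set A | Fn n A /\ U (iter m.+1 (Fnf f) A)] (* (g^(m+1))^-1 (U) *)
  end.

Definition Fn_Ztransitive (n : nat) (f : X -> X) : Prop :=
  forall U V : set (set X), Fn_open n U -> Fn_open n V ->
    U !=set0 -> V !=set0 ->
    exists k : int, Fn_iter_set n f k U `&` V !=set0.

Definition weakly_mixing (f : X -> X) : Prop :=
  forall U1 U2 V1 V2 : set X, open U1 -> open U2 -> open V1 -> open V2 ->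
    U1 !=set0 -> U2 !=set0 -> V1 !=set0 -> V2 !=set0 ->
    exists k : nat, (0 < k)%N /\
      (iter k f @` U1) `&` V1 !=set0 /\ (iter k f @` U2) `&` V2 !=set0.

End Hyperspace.

(* Main.v *)
Require Import Defs.
From HB Require Import structures.
From mathcomp Require Import all_boot all_order all_algebra.
From mathcomp Require Import all_classical all_reals all_analysis.
From mathcomp Require Import zify.
Import Order.TTheory GRing.Theory Num.Theory.
Local Open Scope classical_set_scope.
Local Open Scope ring_scope.


Section Hd.
Context {R : realType} {X : metricType R}.

Lemma ub_seq (g : X -> R) (s : seq X) : exists M, forall x, x \in s -> g x <= M.
Proof.
elim: s => [|a s [M HM]]; first by exists 0.
exists (Num.max (g a) M) => x; rewrite in_cons => /orP[/eqP->|/HM hx].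
  by rewrite le_max lexx.
by rewrite le_max hx orbT.
Qed.

Lemma pt_le_hd1 {A : set X} (B : set X) {s : seq X} {a} :
  A = [set x | x \in s] -> A a -> pt_set_dist a B <= hausdorff_dist A B.
Proof.
move=> hA Aa; rewrite /hausdorff_dist le_max; apply/orP; left.
apply: ub_le_sup; last by exists a.
have [M HM] := ub_seq (fun x => pt_set_dist x B) s.
exists M => _ [x Ax <-]; apply: HM; by move: Ax; rewrite hA.
Qed.

Lemma pt_le_hd2 (A : set X) {B : set X} {s : seq X} {b} :
  B = [set x | x \in s] -> B b -> pt_set_dist b A <= hausdorff_dist A B.
Proof.
move=> hB Bb; rewrite /hausdorff_dist le_max; apply/orP; right.
apply: ub_le_sup; last by exists b.
have [M HM] := ub_seq (fun x => pt_set_dist x A) s.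
exists M => _ [x Bx <-]; apply: HM; by move: Bx; rewrite hB.
Qed.

Lemma pt_lt {a : X} {B : set X} {e} : B !=set0 -> pt_set_dist a B < e ->
  exists2 b, B b & mdist a b < e.
Proof.
move=> [b0 Bb0] /inf_lt [].
  by exists (mdist a b0), b0.
by move=> _ [b Bb <-] h; exists b.
Qed.

Lemma pt_le (a : X) {b : X} {B : set X} : B b -> pt_set_dist a B <= mdist a b.
Proof.
move=> Bb; apply: ge_inf; last by exists b.
by exists 0 => _ [y _ <-]; exact: mdist_ge0.
Qed.

Lemma hd_le (A B : set X) d : A !=set0 -> B !=set0 ->
  (forall a, A a -> exists2 b, B b & mdist a b <= d) ->
  (forall b, B b -> exists2 a, A a & mdist b a <= d) ->
  hausdorff_dist A B <= d.
Proof.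
move=> [a0 Aa0] [b0 Bb0] hAB hBA; rewrite /hausdorff_dist ge_max; apply/andP; split.
  apply: ge_sup; first by exists (pt_set_dist a0 B), a0.
  move=> _ [a Aa <-]; have [b Bb h] := hAB a Aa.
  exact: le_trans (pt_le a Bb) h.
apply: ge_sup; first by exists (pt_set_dist b0 A), b0.
move=> _ [b Bb <-]; have [a Aa h] := hBA b Bb.
exact: le_trans (pt_le b Aa) h.
Qed.


Lemma iter_Fnf (f : X -> X) k A : iter k (Fnf f) A = iter k f @` A.
Proof.
elim: k => [|k IH] /=; first by rewrite image_id.
rewrite IH /Fnf; apply/seteqP; split=> y.
  by move=> [_ [x Ax <-] <-]; exists x.
by move=> [x Ax <-]; exists (iter k f x) => //; exists x.
Qed.

Lemma image_seq (g : X -> X) (s : seq X) :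
  g @` [set x | x \in s] = [set y | y \in map g s].
Proof.
apply/seteqP; split=> y /=.
  by move=> [x xs <-]; apply: map_f.
by move/mapP=> [x xs ->]; exists x.
Qed.

Lemma iter_cont (f : X -> X) k : continuous f -> continuous (iter k f).
Proof.
move=> fc; elim: k => [|k IH] /=; first by move=> x.
by move=> x; apply: (continuous_comp (IH x) (fc _)).
Qed.

Lemma open_pre (f : X -> X) k U : continuous f -> open U -> open (iter k f @^-1` U).
Proof.
move=> fc oU; apply: open_comp => // x _; exact: iter_cont.
Qed.

Lemma iterC (f : X -> X) j k x : iter j f (iter k f x) = iter k f (iter j f x).
Proof. by rewrite -!iterD addnC. Qed.

Lemma wm_multi_aux (f : X -> X) : [set: X] !=set0 -> weakly_mixing f -> continuous f ->
  forall m (Us Vs : nat -> set X),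
  (forall i, (i < m)%N -> [/\ open (Us i), open (Vs i), Us i !=set0 & Vs i !=set0]) ->
  exists U, exists V, [/\ open U, open V, U !=set0, V !=set0 &
    forall k x, U x -> V (iter k f x) -> forall i, (i < m)%N ->
      exists2 x', Us i x' & Vs i (iter k f x')].
Proof.
move=> [x0 _] wm fc; elim=> [|m IH] Us Vs hUV.
  exists setT, setT; split; [exact: openT|exact: openT|by exists x0|by exists x0|by []].
have [U [V [oU oV [u Uu] [v Vv] hP]]] : exists U, exists V, [/\ open U, open V, U !=set0, V !=set0 &
    forall k x, U x -> V (iter k f x) -> forall i, (i < m)%N ->
      exists2 x', Us i x' & Vs i (iter k f x')].
  by apply: IH => i im; apply: hUV; apply: ltnW.
have [oUm oVm neUm neVm] := hUV m (ltnSn m).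
have [k [_ [[_ [[x Ux <-] Umx]] [_ [[y Vy <-] Vmy]]]]] :=
  wm U V (Us m) (Vs m) oU oV oUm oVm (ex_intro _ u Uu) (ex_intro _ v Vv) neUm neVm.
exists (U `&` (iter k f @^-1` Us m)), (V `&` (iter k f @^-1` Vs m)); split.
- by apply: openI => //; apply: open_pre.
- by apply: openI => //; apply: open_pre.
- by exists x.
- by exists y.
move=> j z [Uz Umz] [Vz Vmz] i; rewrite ltnS leq_eqVlt => /orP[/eqP->|im].
  by exists (iter k f z) => //; rewrite iterC.
exact: (hP j z Uz Vz i im).
Qed.

Lemma wm_multi (f : X -> X) : [set: X] !=set0 -> weakly_mixing f -> continuous f ->
  forall m (Us Vs : nat -> set X),
  (forall i, (i < m)%N -> [/\ open (Us i), open (Vs i), Us i !=set0 & Vs i !=set0]) ->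
  exists k, forall i, (i < m)%N -> exists2 x', Us i x' & Vs i (iter k f x').
Proof.
move=> ne wm fc m Us Vs hUV.
have [U [V [oU oV neU neV hP]]] := @wm_multi_aux f ne wm fc m Us Vs hUV.
have [k [_ [[_ [[x Ux <-] Vx]] _]]] := wm U U V V oU oU oV oV neU neU neV neV.
by exists k; apply: (hP k x).
Qed.


Lemma ball_mdist (x y : X) r : ball x r y -> mdist x y < r.
Proof. by rewrite ballEmdist. Qed.

Lemma hd_seq_close (s : seq X) (d0 : X) (ys : nat -> X) (m : nat) r :
  (0 < size s)%N -> (size s <= m)%N ->
  (forall i, (i < m)%N -> mdist (nth d0 s (minn i (size s).-1)) (ys i) < r) ->
  hausdorff_dist [set x | x \in s] [set y | y \in map ys (iota 0 m)] <= r.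
Proof.
move=> s0 sm H; apply: hd_le.
- by exists (nth d0 s 0); rewrite /= mem_nth.
- exists (ys 0); rewrite /= map_f // mem_iota /= add0n.
  exact: leq_trans s0 sm.
- move=> a /= sa; exists (ys (index a s)).
    by rewrite map_f // mem_iota /= add0n (leq_trans _ sm) // index_mem.
  have jm : (index a s < m)%N by rewrite (leq_trans _ sm) // index_mem.
  have := H _ jm; rewrite (minn_idPl _) ?nth_index //.
    by move/ltW.
  by rewrite -ltnS prednK // index_mem.
- move=> b /= /mapP [i]; rewrite mem_iota /= add0n => im ->.
  exists (nth d0 s (minn i (size s).-1)).
    by rewrite /= mem_nth // (leq_ltn_trans (geq_minr _ _)) // prednK.
  by rewrite metric_sym; apply/ltW/H.
Qed.

Lemma wm_Ztrans (n : nat) (f : X -> X) : [set: X] !=set0 -> continuous f ->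
  weakly_mixing f -> Fn_Ztransitive n f.
Proof.
move=> ne fc wm UU VV [UUsub UUo] [VVsub VVo] [A UA] [B VB].
have [e1 e1p h1] := UUo A UA.
have [e2 e2p h2] := VVo B VB.
have [[a0 Aa0] [s [sn hA]]] := UUsub A UA.
have [[b0 Bb0] [t [tn hB]]] := VVsub B VB.
have s0 : (0 < size s)%N.
  by move: Aa0; rewrite hA /=; case: s {sn hA}.
have t0 : (0 < size t)%N.
  by move: Bb0; rewrite hB /=; case: t {tn hB}.
pose m := maxn (size s) (size t).
have m0 : (0 < m)%N by rewrite (leq_trans s0) // leq_maxl.
have mn : (m <= n)%N by rewrite geq_max sn tn.
pose ai i := nth a0 s (minn i (size s).-1).
pose bi i := nth b0 t (minn i (size t).-1).
have e1h : 0 < e1 / 2 by rewrite divr_gt0.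
have e2h : 0 < e2 / 2 by rewrite divr_gt0.
pose Us i := interior (ball (ai i) (e1 / 2)).
pose Vs i := interior (ball (bi i) (e2 / 2)).
have [k hk] := @wm_multi f ne wm fc m Us Vs (fun i _ =>
  And4 (@open_interior _ _) (@open_interior _ _)
    (ex_intro _ (ai i) (nbhsx_ballx (ai i) (e1 / 2) e1h))
    (ex_intro _ (bi i) (nbhsx_ballx (bi i) (e2 / 2) e2h))).
have /choice [xs hxs] : forall i, exists x, (i < m)%N -> Us i x /\ Vs i (iter k f x).
  move=> i; case: (ltnP i m) => im.
    by have [x ? ?] := hk i im; exists x.
  by exists a0.
pose A' := [set x | x \in map xs (iota 0 m)].
have FA' : Fn n A'.
  split; first by exists (xs 0); rewrite /A' /= map_f // mem_iota.
  by exists (map xs (iota 0 m)); rewrite size_map size_iota.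
have UA' : UU A'.
  apply: h1 => //; apply: (le_lt_trans (y := e1 / 2)); last first.
    by rewrite ltr_pdivrMr // ltr_pMr // ltr1n.
  rewrite hA /A'; apply: (@hd_seq_close s a0) => //; first by rewrite leq_maxl.
  by move=> i im; case: (hxs i im) => /interior_subset/ball_mdist.
have FA'k : iter k (Fnf f) A' = [set y | y \in map (iter k f \o xs) (iota 0 m)].
  by rewrite iter_Fnf image_seq map_comp.
exists (Posz k); exists (iter k (Fnf f) A'); split; first by exists A'.
apply: h2.
  rewrite FA'k; split; first by exists (iter k f (xs 0)); rewrite /= (map_f (iter k f \o xs)) // mem_iota.
  by exists (map (iter k f \o xs) (iota 0 m)); rewrite size_map size_iota.
apply: (le_lt_trans (y := e2 / 2)); last first.
  by rewrite ltr_pdivrMr // ltr_pMr // ltr1n.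
rewrite hB FA'k; apply: (@hd_seq_close t b0) => //; first by rewrite leq_maxr.
by move=> i im; case: (hxs i im) => _ /interior_subset/ball_mdist.
Qed.


Lemma mdist_ball (x y : X) r : mdist x y < r -> ball x r y.
Proof. by rewrite ballEmdist. Qed.

Lemma seq_min (s : seq X) (P : X -> R -> Prop) :
  (forall x r r', P x r -> 0 < r' -> r' <= r -> P x r') ->
  (forall x, x \in s -> exists2 r, 0 < r & P x r) ->
  exists2 e, 0 < e & forall x, x \in s -> P x e.
Proof.
move=> Pmono; elim: s => [|a s IH] H; first by exists 1.
have [e e0 He] : exists2 e, 0 < e & forall x, x \in s -> P x e.
  by apply: IH => x xs; apply: H; rewrite in_cons xs orbT.
have [r r0 Pr] := H a (mem_head a s).
exists (Num.min r e); first by rewrite lt_min r0 e0.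
move=> x; rewrite in_cons => /orP[/eqP->|xs].
  by apply: (Pmono a r) => //; [rewrite lt_min r0 e0|rewrite ge_min lexx].
by apply: (Pmono x e); [apply: He|rewrite lt_min r0 e0|rewrite ge_min lexx orbT].
Qed.

Lemma open_ball_sub {U : set X} {x} : open U -> U x ->
  exists2 r, 0 < r & ball x r `<=` U.
Proof.
move=> oU Ux.
have : nbhs x U by apply: open_nbhs_nbhs; split.
by move/nbhs_ballP => [r /= r0 hr]; exists r.
Qed.

Lemma ball_mono (x : X) r r' : r' <= r -> ball x r' `<=` ball x r.
Proof.
move=> h y /ball_mdist hy; apply: mdist_ball; exact: lt_le_trans hy h.
Qed.

Lemma star (n : nat) (f : X -> X) : (2 <= n)%N -> Fn_Ztransitive n f ->
  forall U V : set X, open U -> open V -> U !=set0 -> V !=set0 ->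
  exists m : nat,
    ((exists x, U x /\ U (iter m f x)) /\ (exists y, U y /\ V (iter m f y))) \/
    [/\ (0 < m)%N, (exists x, U x /\ U (iter m f x)) & (exists y, V y /\ U (iter m f y))].
Proof.
move=> n2 Zt U V oU oV [u Uu] [v Vv].
pose UU := [set A | Fn n A /\ A `<=` U].
pose VV := [set A | Fn n A /\ (A `&` U !=set0) /\ (A `&` V !=set0)].
have oUU : Fn_open n UU.
  split; first by move=> A [].
  move=> A [[[a0 Aa0] [s [sn hA]]] AU].
  have [e e0 He] := @seq_min s (fun x r => ball x r `<=` U)
    (fun x r r' h _ le => subset_trans (@ball_mono x r r' le) h)
    (fun x xs => open_ball_sub (U:=U) (x:=x) oU (AU x ltac:(by rewrite hA))).
  exists e => // B FB hd; split => // b Bb.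
  have [_ [t [_ hB]]] := FB.
  have := le_lt_trans (pt_le_hd2 A hB Bb) hd.
  move/(pt_lt (ex_intro _ a0 Aa0)) => [a Aa hba].
  apply: (He a); first by move: Aa; rewrite hA.
  by apply: mdist_ball; rewrite metric_sym.
have oVV : Fn_open n VV.
  split; first by move=> A [].
  move=> A [[[a0 Aa0] [s [sn hA]]] [[x [Ax Ux]] [y [Ay Vy]]]].
  have [r1 r10 h1] := open_ball_sub oU Ux.
  have [r2 r20 h2] := open_ball_sub oV Vy.
  exists (Num.min r1 r2); first by rewrite lt_min r10 r20.
  move=> B FB hd; split => //.
  have [[b0 Bb0] _] := FB.
  split.
    have := le_lt_trans (pt_le_hd1 B hA Ax) hd.
    move/(pt_lt (ex_intro _ b0 Bb0)) => [b Bb hb]; exists b; split => //.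
    by apply: h1; apply: mdist_ball; apply: lt_le_trans hb _; rewrite ge_min lexx.
  have := le_lt_trans (pt_le_hd1 B hA Ay) hd.
  move/(pt_lt (ex_intro _ b0 Bb0)) => [b Bb hb]; exists b; split => //.
  by apply: h2; apply: mdist_ball; apply: lt_le_trans hb _; rewrite ge_min lexx orbT.
have neUU : UU !=set0.
  exists [set x | x \in [:: u]]; split.
    split; first by exists u; rewrite /= mem_head.
    by exists [:: u]; split => //; apply: leq_trans n2.
  by move=> x /=; rewrite mem_seq1 => /eqP->.
have neVV : VV !=set0.
  exists [set x | x \in [:: u; v]]; split.
    split; first by exists u; rewrite /= mem_head.
    by exists [:: u; v].
  split; first by exists u; split => //=; rewrite mem_head.
  by exists v; split => //=; rewrite !inE eqxx orbT.
have [[m|m] [A [hk VA]]] := Zt UU VV oUU oVV neUU neVV.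
  move: hk => [A0 [_ A0U] hA]; subst A.
  move: VA; rewrite iter_Fnf => -[_ [[_ [[x A0x <-] Ux]] [_ [[y A0y <-] Vy]]]].
  exists m; left; split; first by exists x; split => //; apply: A0U.
  by exists y; split => //; apply: A0U.
move: hk => [_ [_]]; rewrite iter_Fnf => sub.
move: VA => [_ [[x [Ax Ux]] [y [Ay Vy]]]].
exists m.+1; right; split => //.
  by exists x; split => //; apply: sub; exists x.
by exists y; split => //; apply: sub; exists y.
Qed.


Definition StarP (f : X -> X) := forall U V : set X, open U -> open V -> U !=set0 -> V !=set0 ->
  exists m : nat,
    ((exists x, U x /\ U (iter m f x)) /\ (exists y, U y /\ V (iter m f y))) \/
    [/\ (0 < m)%N, (exists x, U x /\ U (iter m f x)) & (exists y, V y /\ U (iter m f y))].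

Lemma sep_open (I J : set X) z w : open I -> open J -> I z -> J w -> z <> w ->
  exists I', exists J', [/\ open I', open J', I' `<=` I, J' `<=` J & 
    [/\ I' z, J' w & forall y, I' y -> J' y -> False]].
Proof.
move=> oI oJ Iz Jw zw.
have d0 : 0 < mdist z w by rewrite mdist_gt0; apply/eqP.
have d2 : 0 < mdist z w / 2 by rewrite divr_gt0.
exists (I `&` interior (ball z (mdist z w / 2))), (J `&` interior (ball w (mdist z w / 2))).
split.
- exact: openI oI (@open_interior _ _).
- exact: openI oJ (@open_interior _ _).
- by move=> y [].
- by move=> y [].
split.
- by split => //; apply: nbhsx_ballx.
- by split => //; apply: nbhsx_ballx.
move=> y [_ /interior_subset/ball_mdist h1] [_ /interior_subset/ball_mdist h2].
have := metric_triangle z y w; rewrite (metric_sym y w).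
move=> h; have : mdist z w < mdist z w / 2 + mdist z w / 2 := le_lt_trans h (ltrD h1 h2).
by rewrite -splitr ltxx.
Qed.

Lemma two_points (I : set X) z : connected [set: X] -> (exists a b : X, a <> b) ->
  open I -> I z -> exists2 w, I w & w <> z.
Proof.
move=> conn [a [b ab]] oI Iz; apply: contrapT => H.
have Ieq : forall w, I w -> w = z.
  by move=> w Iw; apply: contrapT => wz; apply: H; exists w.
have := conn [set z] (ex_intro _ z erefl).
have e1 : exists2 C, open C & [set z] = [set: X] `&` C.
  exists I => //; rewrite setTI; apply/seteqP; split => y /=.
    by move->.
  by move/Ieq.
have e2 : exists2 C, closed C & [set z] = [set: X] `&` C.
  exists [set z]; last by rewrite setTI.
  apply: accessible_closed_set1; apply: hausdorff_accessible; exact: metric_hausdorff.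
move=> /(_ e1 e2) eq.
have : [set z] a by rewrite eq.
have : [set z] b by rewrite eq.
by move=> /= bz az; apply: ab; rewrite az bz.
Qed.

Lemma dense1 (f : X -> X) : StarP f -> (exists a b : X, a <> b) ->
  forall W, open W -> W !=set0 -> exists x, W (f x).
Proof.
move=> Hs [a [b ab]] W oW [w Ww].
have [p [p_ pw]] : exists p, True /\ p <> w.
  case: (pselect (a = w)) => [aw|aw]; last by exists a.
  by exists b; split => // bw; apply: ab; rewrite aw bw.
have [I' [J' [oI oJ sI _ [Iw Jp dis]]]] := @sep_open W setT w p oW openT Ww I (fun e => pw (esym e)).
have [[|m] [[[x [Ix Ix']] [y [Iy Jy]]]|[m0 [x [Ix Ix']] _]]] :=
  Hs I' J' oI oJ (ex_intro _ w Iw) (ex_intro _ p Jp).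
- by exfalso; exact: dis Iy Jy.
- by exfalso; move: m0.
- by exists (iter m f x); apply: sI.
- by exists (iter m f x); apply: sI.
Qed.


Lemma dense_iter (f : X -> X) : continuous f -> StarP f -> (exists a b : X, a <> b) ->
  forall k W, open W -> W !=set0 -> exists x, W (iter k f x).
Proof.
move=> fc Hs nd; elim=> [|k IH] W oW neW; first by case: neW => x Wx; exists x.
have [x Wfx] := @dense1 f Hs nd W oW neW.
have [y hy] := IH (f @^-1` W) (@open_pre f 1 W fc oW) (ex_intro _ x Wfx).
by exists y.
Qed.

Lemma notO_iter (f : X -> X) (O : set X) : (forall x, ~ O x -> ~ O (f x)) ->
  forall k x, ~ O x -> ~ O (iter k f x).
Proof. by move=> H; elim=> [|k IH] x Ox //=; apply: H; apply: IH. Qed.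

Lemma trans_fwd (f : X -> X) : continuous f -> StarP f -> connected [set: X] ->
  (exists a b : X, a <> b) ->
  forall A B, open A -> open B -> A !=set0 -> B !=set0 ->
  exists k, exists2 x, A x & B (iter k f x).
Proof.
move=> fc Hs conn nd A B oA oB neA neB; apply: contrapT => H.
have HAB : forall k x, A x -> ~ B (iter k f x).
  by move=> k x Ax Bx; apply: H; exists k, x.
pose O := [set x | exists k, B (iter k f x)].
have oO : open O.
  have -> : O = \bigcup_(k in setT) (iter k f @^-1` B).
    apply/seteqP; split => x /=.
      by move=> [k Bk]; exists k.
    by move=> [k _ Bk]; exists k.
  by apply: bigcup_open => k _; apply: open_pre.
have inv : forall x, ~ O x -> ~ O (f x).
  by move=> x Ox [k Bk]; apply: Ox; exists k.+1; rewrite iterSr.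
pose Kint := interior (~` O).
have oK : open Kint by apply: open_interior.
have AK : forall x, A x -> Kint x.
  move=> x Ax; apply: (@filterS _ _ _ A); last by apply: open_nbhs_nbhs.
  by move=> y Ay [k Bk]; exact: HAB Ay Bk.
have step : forall j y, O y -> Kint (iter j.+1 f y) -> exists2 z, O z & Kint (f z).
  elim=> [|j IH] y Oy Ky; first by exists y.
  case: (pselect (Kint (f y))) => [Kfy|nKfy]; first by exists y.
  rewrite iterSr in Ky.
  have oP : open (iter j.+1 f @^-1` Kint) by apply: open_pre.
  have : nbhs (f y) (iter j.+1 f @^-1` Kint) by apply: open_nbhs_nbhs.
  case: (pselect (exists z, (iter j.+1 f @^-1` Kint) z /\ O z)).
    by move=> [z [Pz Oz]] _; exact: IH Oz Pz.
  move=> nz hP; exfalso; apply: nKfy.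
  apply: (@filterS _ _ _ _ _ _ hP) => z Pz Oz; by apply: nz; exists z; split.
have [z Oz Kfz] : exists2 z, O z & Kint (f z).
  have [m [[_ [y [Ay By]]]|[m0 _ [y [By Ay]]]]] := Hs A B oA oB neA neB.
    by exfalso; exact: HAB Ay By.
  case: m m0 Ay => // m _ Ay.
  apply: (step m y); first by exists 0%N.
  exact: AK.
pose I := O `&` (f @^-1` Kint).
have oI : open I by apply: openI => //; apply: (@open_pre f 1).
have [w Iw wz] := @two_points I z conn nd oI (conj Oz Kfz : I z).
have [I1 [I2 [oI1 oI2 s1 s2 [I1z I2w dis]]]] := @sep_open I I z w oI oI (conj Oz Kfz : I z) Iw (fun e => wz (esym e)).
have bad : forall y k, I y -> O (iter k.+1 f y) -> False.
  move=> y k [_ Kfy]; rewrite iterSr; apply: (@notO_iter f O inv).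
  exact: interior_subset Kfy.
have [[|m] [[_ [y [I1y I2y]]]|[m0 _ [y [I2y I1y]]]]] :=
  Hs I1 I2 oI1 oI2 (ex_intro _ z I1z) (ex_intro _ w I2w).
- exact: dis I1y I2y.
- by move: m0.
- exact: bad y m (s1 _ I1y) (s2 _ I2y).1.
- exact: bad y m (s2 _ I2y) (s1 _ I1y).1.
Qed.


Lemma star_wm (f : X -> X) : continuous f -> StarP f -> connected [set: X] ->
  (exists a b : X, a <> b) -> weakly_mixing f.
Proof.
move=> fc Hs conn nd U1 U2 V1 V2 oU1 oU2 oV1 oV2 neU1 neU2 neV1 neV2.
have T := @trans_fwd f fc Hs conn nd.
have DI := @dense_iter f fc Hs nd.
have oV2' : open (f @^-1` V2) := @open_pre f 1 V2 fc oV2.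
have [x2 V2fx2] := @dense1 f Hs nd V2 oV2 neV2.
have [D0 [u2 U2u2 hD]] := T U2 (f @^-1` V2) oU2 oV2' neU2 (ex_intro _ x2 V2fx2).
pose D := D0.+1.
pose U2' := U2 `&` (iter D f @^-1` V2).
have oU2' : open U2' := openI oU2 (@open_pre f D _ fc oV2).
have neU2' : U2' !=set0 by exists u2.
have [t [w1 U2'w1 hw1]] := T U2' V1 oU2' oV1 neU2' neV1.
pose W := U2' `&` (iter t f @^-1` V1).
have oW : open W := openI oU2' (@open_pre f t _ fc oV1).
have neW : W !=set0 by exists w1.
have [mm [w2 U1w2 hw2]] := T U1 W oU1 oW neU1 neW.
pose U1' := U1 `&` (iter mm f @^-1` W).
have oU1' : open U1' := openI oU1 (@open_pre f mm _ fc oW).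
have neU1' : U1' !=set0 by exists w2.
pose U := iter t f @^-1` U1'.
pose V := iter D f @^-1` W.
have oU : open U := @open_pre f t _ fc oU1'.
have oV : open V := @open_pre f D _ fc oW.
have neU : U !=set0 by have [x hx] := DI t U1' oU1' neU1'; exists x.
have neV : V !=set0 by have [x hx] := DI D W oW neW; exists x.
have [n0 [[[x [Ux Unx]] [y [Uy Vny]]] | [n0pos [x [Ux Unx]] [y [Vy Uny]]]]] :=
  Hs U V oU oV neU neV.
- exists (n0 + D); split; first by rewrite addn_gt0 orbT.
  split.
    exists (iter (n0 + D) f (iter t f y)); split; first by exists (iter t f y) => //; case: Uy.
    have -> : iter (n0 + D) f (iter t f y) = iter t f (iter D f (iter n0 f y)).
      by rewrite -!iterD; congr (iter _ f y); lia.
    by case: Vny.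
  exists (iter (n0 + D) f (iter mm f (iter t f x))); split.
    exists (iter mm f (iter t f x)) => //.
    by case: Ux => _ [[]].
  have -> : iter (n0 + D) f (iter mm f (iter t f x)) = iter D f (iter mm f (iter t f (iter n0 f x))).
    by rewrite -!iterD; congr (iter _ f x); lia.
  by case: Unx => _ [[]].
- exists (n0 + mm + t); split; first by rewrite !addn_gt0 n0pos.
  split.
    exists (iter (n0 + mm + t) f (iter t f x)); split; first by exists (iter t f x) => //; case: Ux.
    have -> : iter (n0 + mm + t) f (iter t f x) = iter t f (iter mm f (iter t f (iter n0 f x))).
      by rewrite -!iterD; congr (iter _ f x); lia.
    by case: Unx => _ [].
  exists (iter (n0 + mm + t) f (iter D f y)); split.
    exists (iter D f y) => //.
    by case: Vy => [[]].
  have -> : iter (n0 + mm + t) f (iter D f y) = iter D f (iter mm f (iter t f (iter n0 f y))).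
    by rewrite -!iterD; congr (iter _ f y); lia.
  by case: Uny => _ [[]].
Qed.

End Hd.

Theorem theorem5 (R : realType) (X : metricType R) (n : nat) (f : X -> X) :
  [set: X] !=set0 -> compact [set: X] -> connected [set: X] ->
  (2 <= n)%N -> continuous f ->
  (Fn_Ztransitive n f <-> weakly_mixing f).
Proof.
move=> ne _ conn n2 fc; split; last by move=> wm; exact: wm_Ztrans ne fc wm.
move=> Zt; case: (pselect (exists a b : X, a <> b)) => [nd|nnd].
  apply: star_wm => //.
  by move=> U V oU oV neU neV; exact: (@star R X n f n2 Zt U V oU oV neU neV).
have eqab : forall a b : X, a = b.
  by move=> a b; apply: contrapT => h; apply: nnd; exists a, b.
move=> U1 U2 V1 V2 _ _ _ _ [u1 U1u1] [u2 U2u2] [v1 V1v1] [v2 V2v2].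
exists 1%N; split => //; split.
  by exists v1; split => //; exists u1 => //; apply: eqab.
by exists v2; split => //; exists u2 => //; apply: eqab.
Qed.
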